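(* Let $k<n$ and $\phi(k)<m<2n$. Then the value in $U_q^+(\mathfrak{so}_{2n})$ of the bracketed word $[x_k\,x_{k+1}\cdots x_{n-2}\,x_n\,y_m]$, where $y_m=e[n+1,m]=[x_{n+1},[x_{n+2},[\dots,[x_{m-1},x_m]\dots]]]$, does not depend on the arrangement of the (skew) brackets on the sequence $x_k,\dots,x_{n-2},x_n,y_m$.
   Context: Let $\mathbf{k}$ be a field, $G$ an abelian group, $n\ge3$, $X=\{x_1,\dots,x_n\}$, $g_i\in G$, characters $\chi^i:G\to\mathbf{k}^*$, $p_{ij}=\chi^i(g_j)$; for homogeneous $u,v$, $p(u,v)=\chi^u(g_v)$ (replace $x_i$ by $g_i$, resp. $\chi^i$). $G\langle X\rangle$: skew group algebra with $x_ig=\chi^i(g)gx_i$; skew bracket $[u,v]=uv-p(u,v)vu$. Fix $q\in\mathbf{k}^*$, $q\ne-1$; assume $p_{ii}=q$ ($1\le i\le n$), $p_{i,i-1}p_{i-1,i}=q^{-1}$ ($1<i<n$), $p_{n-2,n}p_{n,n-2}=q^{-1}$, $p_{n-1,n}p_{n,n-1}=1$, $p_{ij}p_{ji}=1$ for all other $i<j$ with $j>i+1$. $U_q^+(\mathfrak{so}_{2n})$ is the quotient of $G\langle X\rangle$ by the ideal generated by $[x_i,[x_i,x_{i+1}]]$, $[[x_i,x_{i+1}],x_{i+1}]$ ($1\le i\le n-2$), $[x_{n-2},[x_{n-2},x_n]]$, $[[x_{n-2},x_n],x_n]$, $[x_i,x_j]$ ($1\le i<j\le n-1$, $j>i+1$),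 $[x_i,x_n]$ ($i\le n-3$), $[x_{n-1},x_n]$. For $n<i<2n$, $x_i:=x_{2n-i}$; $\phi(i)=2n-i$. (When $k=n-1$ the sequence is $x_n,y_m$.) *)

(* Defs.v *)
From HB Require Import structures.
From mathcomp Require Import all_boot all_order all_algebra.
Set Implicit Arguments. Unset Strict Implicit. Unset Printing Implicit Defensive.
Import GRing.Theory.
Local Open Scope ring_scope.

(* Bracketed words (skew-bracket expressions) in the letters x_i, i : nat.
   A leaf [Lf i] stands for the generator x_i (1 <= i <= n). *)
Inductive bexp : Type :=
| Lf of nat
| Br of bexp & bexp.

Fixpoint leaves (t : bexp) : seq nat :=
  match t with Lf i => [:: i] | Br u v => leaves u ++ leaves v end.

Section Skew.
Variables (K : fieldType) (G : zmodType) (g : nat -> G) (chi : nat -> G -> K).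

(* g_u : replace each x_i of u by g_i (G written additively) *)
Definition gdeg (u : bexp) : G := \sum_(i <- leaves u) g i.
Definition chideg (u : bexp) (h : G) : K := \prod_(i <- leaves u) chi i h.
Definition pbr (u v : bexp) : K := chideg u (gdeg v).

Fixpoint beval (A : algType K) (a : nat -> A) (t : bexp) : A :=
  match t with
  | Lf i => a i
  | Br u v => beval a u * beval a v - pbr u v *: (beval a v * beval a u)
  end.
End Skew.

(* is_bracketing s t : t is obtained by an arrangement of (skew) brackets on
   the sequence of blocks s (each block kept as a single factor). *)
Inductive is_bracketing : seq bexp -> bexp -> Prop :=
| isbr_one b : is_bracketing [:: b] b
| isbr_br s1 s2 t1 t2 :
    is_bracketing s1 t1 -> is_bracketing s2 t2 ->
    is_bracketing (s1 ++ s2) (Br t1 t2).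

Fixpoint rnest (l : seq nat) : bexp :=
  match l with
  | [::] => Lf 0
  | [:: i] => Lf i
  | i :: l' => Br (Lf i) (rnest l')
  end.

(* x_i := x_{2n-i} for n < i < 2n *)
Definition xidx (n i : nat) : nat := if (i <= n)%N then i else (2 * n - i)%N.

Definition ebr (n a b : nat) : bexp :=
  rnest [seq xidx n j | j <- iota a (b.+1 - a)].

Definition ym (n m : nat) : bexp := ebr n n.+1 m.

Definition blocks (n k m : nat) : seq bexp :=
  [seq Lf i | i <- iota k (n.-1 - k)] ++ [:: Lf n; ym n m].

Definition so_rels (K : fieldType) (G : zmodType) (g : nat -> G)
  (chi : nat -> G -> K) (n : nat) (A : algType K) (a : nat -> A) : Prop :=
  let ev := beval g chi a in
  (forall i, (1 <= i <= n - 2)%N ->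
         ev (Br (Lf i) (Br (Lf i) (Lf i.+1))) = 0 /\
         ev (Br (Br (Lf i) (Lf i.+1)) (Lf i.+1)) = 0) /\
      ev (Br (Lf (n - 2)) (Br (Lf (n - 2)) (Lf n))) = 0 /\
      ev (Br (Br (Lf (n - 2)) (Lf n)) (Lf n)) = 0 /\
      (forall i j, (1 <= i)%N -> (i < j <= n - 1)%N -> (i.+1 < j)%N ->
         ev (Br (Lf i) (Lf j)) = 0) /\
      (forall i, (1 <= i <= n - 3)%N -> ev (Br (Lf i) (Lf n)) = 0) /\
      ev (Br (Lf (n - 1)) (Lf n)) = 0.

(* Main.v *)
Require Import Defs.
From HB Require Import structures.
From mathcomp Require Import all_boot all_order all_algebra.
From mathcomp Require Import ring zify lra.
Set Implicit Arguments. Unset Strict Implicit. Unset Printing Implicit Defensive.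
Import GRing.Theory.
Local Open Scope ring_scope.

Section Alg.
Variables (K : fieldType) (A : algType K).

Definition brv (x y : A) (c : K) := x * y - c *: (y * x).

Definition L5 (w1 w2 w3 w4 w5 : A) (c1 c2 c3 c4 c5 : K) :=
  c1 *: w1 + c2 *: w2 + c3 *: w3 + c4 *: w4 + c5 *: w5.

Lemma L5_add w1 w2 w3 w4 w5 a1 a2 a3 a4 a5 b1 b2 b3 b4 b5 :
  L5 w1 w2 w3 w4 w5 a1 a2 a3 a4 a5 + L5 w1 w2 w3 w4 w5 b1 b2 b3 b4 b5 =
  L5 w1 w2 w3 w4 w5 (a1 + b1) (a2 + b2) (a3 + b3) (a4 + b4) (a5 + b5).
Proof.
rewrite /L5 !scalerDl.
rewrite addrACA; congr (_ + _).
rewrite addrACA; congr (_ + _).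
rewrite addrACA; congr (_ + _).
by rewrite addrACA.
Qed.

Lemma L5_opp w1 w2 w3 w4 w5 a1 a2 a3 a4 a5 :
  - L5 w1 w2 w3 w4 w5 a1 a2 a3 a4 a5 =
  L5 w1 w2 w3 w4 w5 (- a1) (- a2) (- a3) (- a4) (- a5).
Proof. by rewrite /L5 !opprD !scaleNr. Qed.

Lemma L5_scale w1 w2 w3 w4 w5 k a1 a2 a3 a4 a5 :
  k *: L5 w1 w2 w3 w4 w5 a1 a2 a3 a4 a5 =
  L5 w1 w2 w3 w4 w5 (k * a1) (k * a2) (k * a3) (k * a4) (k * a5).
Proof. by rewrite /L5 !scalerDr !scalerA. Qed.

Lemma L5_1 w1 w2 w3 w4 w5 : w1 = L5 w1 w2 w3 w4 w5 1 0 0 0 0.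
Proof. by rewrite /L5 !scale0r scale1r !addr0. Qed.
Lemma L5_2 w1 w2 w3 w4 w5 : w2 = L5 w1 w2 w3 w4 w5 0 1 0 0 0.
Proof. by rewrite /L5 !scale0r scale1r !addr0 add0r. Qed.
Lemma L5_3 w1 w2 w3 w4 w5 : w3 = L5 w1 w2 w3 w4 w5 0 0 1 0 0.
Proof. by rewrite /L5 !scale0r scale1r !addr0 !add0r. Qed.
Lemma L5_4 w1 w2 w3 w4 w5 : w4 = L5 w1 w2 w3 w4 w5 0 0 0 1 0.
Proof. by rewrite /L5 !scale0r scale1r !addr0 !add0r. Qed.
Lemma L5_5 w1 w2 w3 w4 w5 : w5 = L5 w1 w2 w3 w4 w5 0 0 0 0 1.
Proof. by rewrite /L5 !scale0r scale1r !add0r. Qed.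
Lemma L5_0 w1 w2 w3 w4 w5 : 0 = L5 w1 w2 w3 w4 w5 0 0 0 0 0.
Proof. by rewrite /L5 !scale0r !add0r. Qed.


Ltac lin5 w1 w2 w3 w4 w5 :=
  let LL := fresh "LL" in
  pose LL := L5 w1 w2 w3 w4 w5;
  let ladd := fresh "ladd" in let lopp := fresh "lopp" in let lsc := fresh "lsc" in
  let e := fresh "e" in
  (have ladd : forall a1 a2 a3 a4 a5 b1 b2 b3 b4 b5, LL a1 a2 a3 a4 a5 + LL b1 b2 b3 b4 b5 =
     LL (a1+b1) (a2+b2) (a3+b3) (a4+b4) (a5+b5) by move=> *; apply: L5_add);
  (have lopp : forall a1 a2 a3 a4 a5, - LL a1 a2 a3 a4 a5 = LL (-a1) (-a2) (-a3) (-a4) (-a5)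
     by move=> *; apply: L5_opp);
  (have lsc : forall k a1 a2 a3 a4 a5, k *: LL a1 a2 a3 a4 a5 = LL (k*a1) (k*a2) (k*a3) (k*a4) (k*a5)
     by move=> *; apply: L5_scale);
  (have e : w1 = LL 1 0 0 0 0 by apply: L5_1);
  try (is_var w1; rewrite [w1]e); clear e;
  (have e : w2 = LL 0 1 0 0 0 by apply: L5_2);
  try (is_var w2; rewrite [w2]e); clear e;
  (have e : w3 = LL 0 0 1 0 0 by apply: L5_3);
  try (is_var w3; rewrite [w3]e); clear e;
  (have e : w4 = LL 0 0 0 1 0 by apply: L5_4);
  try (is_var w4; rewrite [w4]e); clear e;
  (have e : w5 = LL 0 0 0 0 1 by apply: L5_5);
  try (is_var w5; rewrite [w5]e); clear e;
  (have e : 0 = LL 0 0 0 0 0 by apply: L5_0);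
  try rewrite [RHS]e; clear e;
  do 4 rewrite ?lsc ?lopp ?ladd;
  rewrite /LL; f_equal.

Ltac nrm := rewrite /brv; rewrite ?mulrBl ?mulrBr ?mulrDl ?mulrDr ?(=^~ scalerAl) ?(=^~ scalerAr) ?mulrA ?scalerBr ?scalerDr ?scalerA ?scalerN ?mulrN ?mulNr ?opprB ?opprD ?opprK;
  rewrite ?mulrBl ?mulrBr ?mulrDl ?mulrDr ?(=^~ scalerAl) ?(=^~ scalerAr) ?mulrA ?scalerBr ?scalerDr ?scalerA ?scalerN ?mulrN ?mulNr ?opprB ?opprD ?opprK;
  rewrite ?mulrBl ?mulrBr ?mulrDl ?mulrDr ?(=^~ scalerAl) ?(=^~ scalerAr) ?mulrA ?scalerBr ?scalerDr ?scalerA ?scalerN ?mulrN ?mulNr ?opprB ?opprD ?opprK.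

Lemma br_comm (x y z : A) pxy pxz pyz :
  brv x y pxy = 0 -> brv x z pxz = 0 -> brv x (brv y z pyz) (pxy * pxz) = 0.
Proof.
move=> H1 H2.
have Hy : x * y = pxy *: (y * x) by apply/eqP; rewrite -subr_eq0; apply/eqP.
have Hz : x * z = pxz *: (z * x) by apply/eqP; rewrite -subr_eq0; apply/eqP.
have Hy' w : w * x * y = pxy *: (w * y * x) by rewrite -mulrA Hy -scalerAr mulrA.
have Hz' w : w * x * z = pxz *: (w * z * x) by rewrite -mulrA Hz -scalerAr mulrA.
nrm. rewrite ?(Hy, Hz). nrm. rewrite ?(Hy', Hz'). nrm.
move: (y * z * x) (z * y * x) => w1 w2.
lin5 w1 w2 (0:A) (0:A) (0:A); ring.
Qed.

Lemma br_jac (u v w : A) puv puw pvw :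
  brv u w puw = 0 ->
  brv (brv u v puv) w (puw * pvw) = brv u (brv v w pvw) (puv * puw).
Proof.
move=> H1.
have Hy : u * w = puw *: (w * u) by apply/eqP; rewrite -subr_eq0; apply/eqP.
have Hy' x : x * u * w = puw *: (x * w * u) by rewrite -mulrA Hy -scalerAr mulrA.
nrm. rewrite ?Hy. nrm. rewrite ?Hy'. nrm.
move: (u * v * w) (v * w * u) (w * u * v) (w * v * u) => w1 w2 w3 w4.
lin5 w1 w2 w3 w4 (0:A); ring.
Qed.

Lemma br_core (a b c : A) q pab pba pac pca pbc pcb :
  q != 0 -> q != -1 -> pab != 0 -> pac != 0 -> pbc != 0 ->
  pab * pba = q^-1 -> pac * pca = q^-1 -> pbc * pcb = 1 ->
  brv a (brv a b pab) (q * pab) = 0 ->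
  brv (brv c a pca) a (pca * q) = 0 ->
  brv c b pcb = 0 ->
  brv a (brv b (brv a c pac) (pba * pbc)) (pab * (q * pac)) = 0.
Proof.
move=> q0 qn ab0 ac0 bc0 Hba Hca Hcb H1 H4 H5.
have eba : pba = q^-1 / pab by rewrite -Hba; field.
have eca : pca = q^-1 / pac by rewrite -Hca; field.
have ecb : pcb = 1 / pbc by rewrite -Hcb; field.
have R5 : c * b = pcb *: (b * c) by apply/eqP; rewrite -subr_eq0; apply/eqP.
have R5' x : x * c * b = pcb *: (x * b * c) by rewrite -mulrA R5 -scalerAr mulrA.
have R1 : a * a * b = (pab + q * pab) *: (a * b * a) - (q * pab * pab) *: (b * a * a).
  apply/eqP; rewrite -subr_eq0; apply/eqP; rewrite -[RHS]H1; nrm.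
  move: (a * a * b) (a * b * a) (b * a * a) => w1 w2 w3.
  lin5 w1 w2 w3 (0:A) (0:A); ring.
have R1' x : x * a * a * b = (pab + q * pab) *: (x * a * b * a) - (q * pab * pab) *: (x * b * a * a).
  have -> : x * a * a * b = x * (a * a * b) by rewrite !mulrA.
  by rewrite R1 mulrBr -!scalerAr !mulrA.
have R4 : c * a * a = (pca + pca * q) *: (a * c * a) - (pca * q * pca) *: (a * a * c).
  apply/eqP; rewrite -subr_eq0; apply/eqP; rewrite -[RHS]H4; nrm.
  move: (c * a * a) (a * c * a) (a * a * c) => w1 w2 w3.
  lin5 w1 w2 w3 (0:A) (0:A); ring.
have R4' x : x * c * a * a = (pca + pca * q) *: (x * a * c * a) - (pca * q * pca) *: (x * a * a * c).
  have -> : x * c * a * a = x * (c * a * a) by rewrite !mulrA.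
  by rewrite R4 mulrBr -!scalerAr !mulrA.
have q1 : q + 1 != 0 by rewrite addr_eq0.
have N0 : (q + 1) *: (pca *: (a*c*a*b) - (q*pca*pca*pcb*pab) *: (a*b*a*c) - pab *: (c*a*b*a)
     + (q*pab*pab*pcb*pca) *: (b*a*c*a)) = c*a*a*b - c*a*a*b.
  rewrite [X in _ = _ - X]R1' R4.
  nrm.
  do 4 (rewrite ?R5 ?R5' ?R1 ?R1' ?R4 ?R4'; nrm).
  move: (a * c * a * b) (a * b * a * c) (c * a * b * a) (b * a * c * a) (b * a * a * c) => w1 w2 w3 w4 w5.
  lin5 w1 w2 w3 w4 w5; rewrite ?eba ?eca ?ecb; field; rewrite ?q0 ?ab0 ?ac0 ?bc0 //=.
move: N0; rewrite subrr; move/eqP; rewrite scaler_eq0 (negbTE q1) /=; move/eqP => N0.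
have Ecaba : c*a*b*a = pab^-1 *: (pca *: (a*c*a*b) - (q*pca*pca*pcb*pab) *: (a*b*a*c)
     + (q*pab*pab*pcb*pca) *: (b*a*c*a)).
  have -> : pca *: (a*c*a*b) - (q*pca*pca*pcb*pab) *: (a*b*a*c)
     + (q*pab*pab*pcb*pca) *: (b*a*c*a) = pab *: (c*a*b*a).
    apply/eqP; rewrite -subr_eq0; apply/eqP; rewrite -[RHS]N0.
    move: (a * c * a * b) (a * b * a * c) (c * a * b * a) (b * a * c * a) => w1 w2 w3 w4.
    lin5 w1 w2 w3 w4 (0:A); ring.
  by rewrite scalerA mulVf // scale1r.
nrm.
do 4 (rewrite ?R5 ?R5' ?R1 ?R1' ?R4 ?R4'; nrm).
rewrite ?Ecaba; nrm.
move: (a * b * a * c) (a * b * c * a) (a * c * a * b) (b * a * a * c) (b * a * c * a) => w1 w2 w3 w4 w5.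
lin5 w1 w2 w3 w4 w5; rewrite eba eca ecb; field; rewrite ?q0 ?ab0 ?ac0 ?bc0 //=.
Qed.
End Alg.

Section Main.
Variables (K : fieldType) (G : zmodType) (g : nat -> G) (chi : nat -> G -> K).
Hypothesis chi_mul : forall i x y, chi i (x + y) = chi i x * chi i y.
Variables (A : algType K) (a : nat -> A).

Local Notation ev := (beval g chi a).
Local Notation pb := (pbr g chi).

Lemma evBr u v : ev (Br u v) = brv (ev u) (ev v) (pb u v).
Proof. by []. Qed.

Lemma pbrBrl u v w : pb (Br u v) w = pb u w * pb v w.
Proof. by rewrite /pbr /chideg /= big_cat. Qed.

Lemma pbrBrr u v w : pb u (Br v w) = pb u v * pb u w.
Proof.
rewrite /pbr /chideg /gdeg /= big_cat /= -big_split /=.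
by apply: eq_bigr => i _; rewrite chi_mul.
Qed.

Lemma pbr_LL i j : pb (Lf i) (Lf j) = chi i (g j).
Proof. by rewrite /pbr /chideg /gdeg /= !big_seq1. Qed.

Definition comm u v := ev (Br u v) = 0.

Lemma comm_Br u v w : comm u v -> comm u w -> comm u (Br v w).
Proof. rewrite /comm !evBr pbrBrr; exact: br_comm. Qed.

Lemma jac u v w : comm u w -> ev (Br (Br u v) w) = ev (Br u (Br v w)).
Proof. rewrite /comm !evBr pbrBrl pbrBrr; exact: br_jac. Qed.

Definition eqv X Y := ev X = ev Y /\ leaves X = leaves Y.

Lemma eqv_Br X X' Y Y' : eqv X X' -> eqv Y Y' -> eqv (Br X Y) (Br X' Y').
Proof.
move=> [e1 l1] [e2 l2]; split; last by rewrite /= l1 l2.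
by rewrite !evBr e1 e2 /pbr /chideg /gdeg l1 l2.
Qed.

Lemma eqv_refl X : eqv X X. Proof. by []. Qed.

Fixpoint rn (s : seq bexp) : bexp :=
  match s with [::] => Lf 0 | [:: b] => b | b :: s' => Br b (rn s') end.

Fixpoint allP (P : bexp -> Prop) (s : seq bexp) : Prop :=
  match s with [::] => True | b :: s' => P b /\ allP P s' end.

Fixpoint NA (s : seq bexp) : Prop :=
  match s with [::] => True | b :: s' => allP (comm b) (behead s') /\ NA s' end.

Lemma allP_cat P s1 s2 : allP P (s1 ++ s2) <-> allP P s1 /\ allP P s2.
Proof. elim: s1 => [|b s IH] /=; tauto. Qed.

Lemma leaves_rn s : s <> [::] -> leaves (rn s) = flatten (map leaves s).
Proof.
elim: s => [|b s IH]; first by move=> /(_ erefl). move=> _; case: s IH => [|c s] IH /=; first by rewrite cats0.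
by rewrite IH.
Qed.

Lemma br_nonnil s t : is_bracketing s t -> s <> [::].
Proof.
elim=> [b|s1 s2 t1 t2 _ IH1 _ _] //.
by case: s1 IH1 => // /(_ erefl).
Qed.

Lemma leaves_br s t : is_bracketing s t -> leaves t = flatten (map leaves s).
Proof.
elim=> [b|s1 s2 t1 t2 _ IH1 _ IH2] /=; first by rewrite cats0.
by rewrite IH1 IH2 map_cat flatten_cat.
Qed.

Lemma comm_rn b s : s <> [::] -> allP (comm b) s -> comm b (rn s).
Proof.
elim: s => [|c s IH]; first by move=> /(_ erefl). move=> _; case: s IH => [|d s] IH /= [h1 h2]; first exact: h1.
apply: comm_Br => //; exact: IH.
Qed.

Lemma NA_catl s1 s2 : NA (s1 ++ s2) -> NA s1.
Proof.
elim: s1 => [|b s IH] //= [h1 h2]; split; last exact: IH.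
case: s h1 {IH h2} => [|c s] //= /allP_cat []; done.
Qed.

Lemma NA_catr s1 s2 : NA (s1 ++ s2) -> NA s2.
Proof. elim: s1 => [|b s IH] //= [_ h]; exact: IH. Qed.

Lemma rn_cat s1 s2 : s1 <> [::] -> s2 <> [::] -> NA (s1 ++ s2) ->
  eqv (Br (rn s1) (rn s2)) (rn (s1 ++ s2)).
Proof.
elim: s1 => [|b s1 IH]; first by move=> /(_ erefl). move=> _ ne2; case: s1 IH => [|c s1] IH.
  clear IH; case: s2 ne2 => // d s2 _ _; exact: eqv_refl.
move=> /= [h1 h2].
have ne : (c :: s1 ++ s2) <> [::] by [].
have Hc : comm b (rn s2).
  apply: comm_rn => //; move: h1 => /= /allP_cat []; done.
have [e l] := IH (fun h => ltac:(discriminate h)) ne2 h2.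
change (eqv (Br (Br b (rn (c :: s1))) (rn s2)) (Br b (rn (c :: s1 ++ s2)))).
split.
  rewrite jac //.
  by have [] := eqv_Br (eqv_refl b) (conj e l).
transitivity (leaves b ++ leaves (Br (rn (c :: s1)) (rn s2))).
  by rewrite [LHS]/= catA.
by rewrite l.
Qed.

Lemma br_rn s t : is_bracketing s t -> NA s -> ev t = ev (rn s).
Proof.
elim=> [b|s1 s2 t1 t2 B1 IH1 B2 IH2] // hN.
have [e _] := rn_cat (br_nonnil B1) (br_nonnil B2) hN.
rewrite -e !evBr (IH1 (NA_catl hN)) (IH2 (NA_catr hN)).
congr brv.
rewrite /pbr /chideg /gdeg (leaves_br B1) (leaves_br B2).
by rewrite (leaves_rn (br_nonnil B1)) (leaves_rn (br_nonnil B2)).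
Qed.


Lemma allP_nth P s : (forall i, (i < size s)%N -> P (nth (Lf 0) s i)) -> allP P s.
Proof.
elim: s => [|b s IH] //= H; split; first exact: (H 0%N).
by apply: IH => i hi; apply: (H i.+1).
Qed.

Lemma NA_nth s : (forall i j, (i.+1 < j < size s)%N -> comm (nth (Lf 0) s i) (nth (Lf 0) s j)) -> NA s.
Proof.
elim: s => [|b s IH] //= H; split; last by apply: IH => i j hij; apply: (H i.+1 j.+1).
apply: allP_nth => i; rewrite size_behead => hi.
rewrite nth_behead; apply: (H 0%N i.+2) => /=.
case: s hi {IH H} => //= c s hi; by rewrite ltnS.
Qed.

Lemma eqv_sym X Y : eqv X Y -> eqv Y X.
Proof. by case. Qed.

Lemma eqv_trans X Y Z : eqv X Y -> eqv Y Z -> eqv X Z.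
Proof. by case=> e1 l1 [e2 l2]; split; [rewrite e1 | rewrite l1]. Qed.

Lemma jac_eqv u v w : comm u w -> eqv (Br (Br u v) w) (Br u (Br v w)).
Proof. by move=> h; split; [exact: jac | rewrite /= catA]. Qed.

Lemma comm_rnest j l : l <> [::] -> (forall x, x \in l -> comm (Lf j) (Lf x)) ->
  comm (Lf j) (rnest l).
Proof.
elim: l => [|x l IH]; first by move=> /(_ erefl).
move=> _; case: l IH => [|y l] IH H; first by apply: H; rewrite inE.
apply: comm_Br; first by apply: H; rewrite inE eqxx.
apply: IH => // z hz; apply: H; by rewrite inE hz orbT.
Qed.

Fixpoint dec (t L : nat) : seq nat := if L is L'.+1 then t :: dec t.-1 L' else [::].

Lemma mem_dec t L x : x \in dec t L -> (t.+1 - L <= x <= t)%N.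
Proof.
elim: L t => [|L IH] t //=; rewrite inE => /orP [/eqP -> | /IH]; lia.
Qed.

Lemma map_xidx n j L : map (xidx n) (iota (n.+1 + j) L) = dec (n.-1 - j) L.
Proof.
elim: L j => [|L IH] j //=.
rewrite /xidx ifN; last by lia.
have -> : (2 * n - (n.+1 + j) = n.-1 - j)%N by lia.
by rewrite -addnS IH; congr (_ :: dec _ _); lia.
Qed.

Lemma ym_dec n m : ym n m = rnest (dec n.-1 (m - n)).
Proof. by rewrite /ym /ebr subSS -(addn0 n.+1) map_xidx subn0. Qed.

Section Letters.
Variables (n : nat) (q : K).
Hypothesis chi_unit : forall i x, chi i x != 0.
Hypothesis q_unit : q != 0.
Hypothesis q_neq : q != -1.
Hypothesis Hpii : forall i, (1 <= i <= n)%N -> chi i (g i) = q.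
Hypothesis Hadj : forall i, (1 < i < n)%N -> chi i (g i.-1) * chi i.-1 (g i) = q^-1.
Hypothesis Hfar : forall i j, (1 <= i)%N -> (i < j <= n)%N -> (i.+1 < j)%N ->
     (i, j) != ((n - 2)%N, n) -> chi i (g j) * chi j (g i) = 1.
Hypothesis Hrels : so_rels g chi n a.

Lemma commR i j : (1 <= i)%N -> (i.+1 < j <= n - 1)%N -> comm (Lf i) (Lf j).
Proof.
move=> h1 h2; have [_ [_ [_ [H _]]]] := Hrels.
apply: H => //; lia.
Qed.

Lemma commL i j : (1 <= j)%N -> (j.+1 < i <= n - 1)%N -> comm (Lf i) (Lf j).
Proof.
move=> h1 h2; have := commR h1 h2.
rewrite /comm !evBr !pbr_LL /brv => /eqP; rewrite subr_eq0 => /eqP H.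
rewrite H scalerA mulrC Hfar ?scale1r ?subrr //; try lia.
apply/negP => /eqP [_ h]; lia.
Qed.

Lemma commN i : (1 <= i <= n - 3)%N -> comm (Lf i) (Lf n).
Proof.
move=> h; have [_ [_ [_ [_ [H _]]]]] := Hrels.
exact: H.
Qed.

Lemma core i : (2 <= i <= n - 2)%N ->
  ev (Br (Lf i) (Br (Lf i.+1) (Br (Lf i) (Lf i.-1)))) = 0.
Proof.
move=> hi.
have [H1 [_ [_ [H5 _]]]] := Hrels.
have [R1 _] := H1 i ltac:(lia).
have [_ R4] := H1 i.-1 ltac:(lia).
have R5 : comm (Lf i.-1) (Lf i.+1) by apply: commR; lia.
rewrite prednK in R4; last by lia.
move: R1 R4 R5; rewrite /comm !evBr !pbrBrr !pbrBrl !pbr_LL !Hpii; try lia.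
move=> R1 R4 R5.
apply: (@br_core _ _ (a i) (a i.+1) (a i.-1) q (chi i (g i.+1)) (chi i.+1 (g i))
   (chi i (g i.-1)) (chi i.-1 (g i)) (chi i.+1 (g i.-1)) (chi i.-1 (g i.+1))) => //.
- by rewrite mulrC; have := Hadj (i := i.+1) ltac:(lia).
- by apply: Hadj; lia.
- rewrite mulrC; apply: Hfar; try lia.
  apply/negP => /eqP [_ h]; lia.
Qed.

Lemma key L : forall i t, (2 <= i)%N -> (t.+1 - L < i < t)%N -> (L <= t)%N -> (t <= n - 1)%N ->
  comm (Lf i) (rnest (dec t L)).
Proof.
elim: L => [|L IH] i t hi2 h1 h2 h3; first by lia.
have [ht|ht] : (t = i.+1 \/ i.+2 <= t)%N by lia.
- subst t.
  case: L IH h1 h2 => [|[|L2]] IH h1 h2; try lia.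
  case: L2 IH h1 h2 => [|L3] IH h1 h2.
  + apply: core; lia.
  + set z := rnest (dec i.-2 L3.+1).
    have Hz : forall j, (i <= j <= i.+1)%N -> comm (Lf j) z.
      move=> j hj; apply: comm_rnest => // x /mem_dec hx.
      apply: commL; lia.
    change (ev (Br (Lf i) (Br (Lf i.+1) (Br (Lf i) (Br (Lf i.-1) z)))) = 0).
    have E1 : eqv (Br (Lf i) (Br (Lf i.-1) z)) (Br (Br (Lf i) (Lf i.-1)) z).
      by apply: eqv_sym; apply: jac_eqv; apply: Hz; lia.
    have E2 : eqv (Br (Lf i.+1) (Br (Br (Lf i) (Lf i.-1)) z))
                  (Br (Br (Lf i.+1) (Br (Lf i) (Lf i.-1))) z).
      by apply: eqv_sym; apply: jac_eqv; apply: Hz; lia.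
    have [-> _] := eqv_Br (eqv_refl (Lf i)) (eqv_trans (eqv_Br (eqv_refl (Lf i.+1)) E1) E2).
    rewrite -jac; last by apply: Hz; lia.
    rewrite evBr core; last by lia.
    by rewrite /brv mul0r mulr0 scaler0 subrr.
- case: L IH h1 h2 => [|L] IH h1 h2; first by lia.
  change (comm (Lf i) (Br (Lf t) (rnest (dec t.-1 L.+1)))).
  apply: comm_Br; first by apply: commR; lia.
  apply: IH => //; lia.
Qed.

Lemma comm_ym i m : (2 * n - m < i)%N -> (i <= n - 2)%N -> (m < 2 * n)%N -> (n < m)%N ->
  (3 <= n)%N -> comm (Lf i) (ym n m).
Proof.
move=> h1 h2 h3 h4 h5; rewrite ym_dec; apply: key; lia.
Qed.

Lemma NA_blocks k m : (1 <= k < n)%N -> (2 * n - k < m < 2 * n)%N -> (3 <= n)%N ->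
  NA (blocks n k m).
Proof.
move=> hk hm hn; apply: NA_nth.
rewrite /blocks size_cat size_map size_iota /= => i j hij.
set r := (n.-1 - k)%N.
have hi : (i < r)%N by lia.
rewrite nth_cat size_map size_iota -/r hi (nth_map 0%N) ?size_iota // nth_iota //.
rewrite nth_cat size_map size_iota -/r.
case: (ltnP j r) => hj.
  rewrite (nth_map 0%N) ?size_iota // nth_iota //.
  apply: commR; lia.
have [ej|ej] : (j = r \/ j = r.+1)%N by lia.
  rewrite ej subnn /=; apply: commN; lia.
rewrite ej subSn // subnn /=; apply: comm_ym; lia.
Qed.

End Letters.

End Main.

Theorem lemma6p5 (K : fieldType) (G : zmodType) (n : nat) (g : nat -> G)
  (chi : nat -> G -> K) (q : K)
  (chi_mul : forall i x y, chi i (x + y) = chi i x * chi i y)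
  (chi_unit : forall i x, chi i x != 0)
  (q_unit : q != 0) (q_neq : q != -1) (n_ge3 : (3 <= n)%N) :
  let p i j := chi i (g j) in
  (forall i, (1 <= i <= n)%N -> p i i = q) ->
  (forall i, (1 < i < n)%N -> p i i.-1 * p i.-1 i = q^-1) ->
  p (n - 2)%N n * p n (n - 2)%N = q^-1 ->
  p (n - 1)%N n * p n (n - 1)%N = 1 ->
  (forall i j, (1 <= i)%N -> (i < j <= n)%N -> (i.+1 < j)%N ->
     (i, j) != ((n - 2)%N, n) -> p i j * p j i = 1) ->
  forall k m : nat, (1 <= k < n)%N -> (2 * n - k < m < 2 * n)%N ->
  forall (A : algType K) (a : nat -> A), so_rels g chi n a ->
  forall t1 t2 : bexp,
    is_bracketing (blocks n k m) t1 -> is_bracketing (blocks n k m) t2 ->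
    beval g chi a t1 = beval g chi a t2.
Proof.
move=> p Hpii Hadj _ _ Hfar k m hk hm A a Hrels t1 t2 B1 B2.
have NAb := NA_blocks chi_mul chi_unit q_unit q_neq Hpii Hadj Hfar Hrels hk hm n_ge3.
by rewrite (br_rn chi_mul B1 NAb) (br_rn chi_mul B2 NAb).
Qed.
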